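(* Let $d \ge 1$ and let $\beta=(\beta_1,\ldots,\beta_{d+1})$ be an optimal solution of the problem of minimizing $\beta_1\cdots\beta_d$ over all $(\beta_1,\dots,\beta_{d+1}) \in \mathbb{R}^{d+1}$ satisfying $\beta_1 \ge \cdots \ge \beta_{d+1} \ge 0$, $\beta_1+\cdots+\beta_{d+1}=1$, and, for every $t \in \{1,\dots,d\}$, \[ \mathrm{PS}(t):\quad \prod_{i=1}^t (\beta_i - \beta_{d+1}) \le \sum_{j=t+1}^{d+1} (\beta_j - \beta_{d+1}) + (d+1)\beta_{d+1}. \] Then there exists $\ell \in \{0,\ldots,d\}$ such that (a) $\beta_t = \beta_{t+1}$ for every $t$ with $\ell+1 \le t \le d$, and (b) $\mathrm{PS}(t)$ holds with equality for every $t$ with $1 \le t \le \ell-1$. *)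

(* Defs.v *)
From mathcomp Require Import all_boot all_order all_algebra.
Set Implicit Arguments. Unset Strict Implicit. Unset Printing Implicit Defensive.
Import Order.TTheory GRing.Theory Num.Theory.
Local Open Scope ring_scope.

(* A point beta of R^{d+1} is represented as b : nat -> R, with
   beta_i = b i for 1 <= i <= d+1; values outside 1..d+1 are irrelevant. *)

Definition PS_lhs {R : realFieldType} (d : nat) (b : nat -> R) (t : nat) : R :=
  \prod_(1 <= i < t.+1) (b i - b d.+1).
Definition PS_rhs {R : realFieldType} (d : nat) (b : nat -> R) (t : nat) : R :=
  \sum_(t.+1 <= j < d.+2) (b j - b d.+1) + d.+1%:R * b d.+1.
Definition PS {R : realFieldType} (d : nat) (b : nat -> R) (t : nat) : Prop :=
  PS_lhs d b t <= PS_rhs d b t.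

Definition feasible {R : realFieldType} (d : nat) (b : nat -> R) : Prop :=
  (forall i, (1 <= i <= d)%N -> b i.+1 <= b i) /\
  0 <= b d.+1 /\
  \sum_(1 <= i < d.+2) b i = 1 /\
  (forall t, (1 <= t <= d)%N -> PS d b t).

Definition objective {R : realFieldType} (d : nat) (b : nat -> R) : R :=
  \prod_(1 <= i < d.+1) b i.

Definition optimal {R : realFieldType} (d : nat) (b : nat -> R) : Prop :=
  feasible d b /\ forall b' : nat -> R, feasible d b' -> objective d b <= objective d b'.

(* Main.v *)
Require Import Defs.
From mathcomp Require Import all_boot all_order all_algebra.
From mathcomp Require Import reals.
From mathcomp Require Import zify ring lra.
Import Order.TTheory GRing.Theory Num.Theory.
Local Open Scope ring_scope.

Lemma prod_upd (R : realFieldType) (r : seq nat) (F G : nat -> R) j :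
  j \in r -> uniq r -> (forall i, i != j -> G i = F i) ->
  (\prod_(i <- r) G i) * F j = G j * \prod_(i <- r) F i.
Proof.
move=> jr ur HG; rewrite (bigD1_seq j jr ur) [in RHS](bigD1_seq j jr ur).
rewrite (eq_bigr F); last by move=> i /HG.
by rewrite mulrAC -mulrA.
Qed.

Lemma prod_out (R : realFieldType) (r : seq nat) (F G : nat -> R) j :
  j \notin r -> (forall i, i != j -> G i = F i) ->
  \prod_(i <- r) G i = \prod_(i <- r) F i.
Proof.
move=> jr HG; apply: eq_big_seq => i ir; apply: HG.
by apply/eqP => eij; move: jr; rewrite -eij ir.
Qed.

Lemma sum_upd (R : realFieldType) (r : seq nat) (F G : nat -> R) j :
  j \in r -> uniq r -> (forall i, i != j -> G i = F i) ->
  (\sum_(i <- r) G i) + F j = G j + \sum_(i <- r) F i.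
Proof.
move=> jr ur HG; rewrite (bigD1_seq j jr ur) [in RHS](bigD1_seq j jr ur).
rewrite (eq_bigr F); last by move=> i /HG.
by rewrite addrAC -addrA.
Qed.

Lemma sum_out (R : realFieldType) (r : seq nat) (F G : nat -> R) j :
  j \notin r -> (forall i, i != j -> G i = F i) ->
  \sum_(i <- r) G i = \sum_(i <- r) F i.
Proof.
move=> jr HG; apply: eq_big_seq => i ir; apply: HG.
by apply/eqP => eij; move: jr; rewrite -eij ir.
Qed.

Lemma small_exists (R : realFieldType) (f : nat -> R) (x : R) n :
  0 < x -> (forall s, (s < n)%N -> 0 < f s) ->
  exists e, [/\ 0 < e, e <= x & forall s, (s < n)%N -> e <= f s].
Proof.
move=> x0; elim: n => [|n IH] Hf.
  by exists x; split => // s.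
have [e [e0 ex es]] : exists e, [/\ 0 < e, e <= x & forall s, (s < n)%N -> e <= f s].
  by apply: IH => s sn; apply: Hf; lia.
exists (Order.min e (f n)); split.
- by rewrite lt_min e0 Hf.
- by rewrite ge_min ex.
- move=> s; rewrite ltnS leq_eqVlt => /orP[/eqP->|sn]; rewrite ge_min.
    by rewrite lexx orbT.
  by rewrite es.
Qed.

Lemma hchain (R : realFieldType) (g : nat -> R) u w :
  (forall s, (u <= s)%N -> (s.+2 <= w)%N -> g s.+2 - g s.+1 <= g s.+1 - g s) ->
  forall s k, (u <= s)%N -> ((s + k).+1 <= w)%N ->
  g (s+k)%N.+1 - g (s+k)%N <= g s.+1 - g s.
Proof.
move=> Hc s; elim=> [|k IH] us skw; first by rewrite !addn0 lexx.
have h := IH us ltac:(lia).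
apply: le_trans h; rewrite !addnS; apply: Hc; lia.
Qed.

Lemma tele_le (R : realFieldType) (g : nat -> R) s k :
  (forall j, (s <= j)%N -> (j < s + k)%N -> g j.+1 - g j <= 0) -> g (s + k)%N <= g s.
Proof.
elim: k => [|k IH] H; first by rewrite addn0.
have h1 := H (s + k)%N (leq_addr _ _) ltac:(lia).
have h2 : g (s + k)%N <= g s by apply: IH => j a b; apply: H; lia.
rewrite !addnS; lra.
Qed.

Lemma tele_ge (R : realFieldType) (g : nat -> R) s k :
  (forall j, (s <= j)%N -> (j < s + k)%N -> 0 <= g j.+1 - g j) -> g s <= g (s + k)%N.
Proof.
elim: k => [|k IH] H; first by rewrite addn0.
have h1 := H (s + k)%N (leq_addr _ _) ltac:(lia).
have h2 : g s <= g (s + k)%N by apply: IH => j a b; apply: H; lia.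
rewrite !addnS; lra.
Qed.

Lemma concave_pos (R : realFieldType) (g : nat -> R) u w t :
  (forall s, (u <= s)%N -> (s.+2 <= w)%N -> g s.+2 - g s.+1 <= g s.+1 - g s) ->
  (forall s, (u <= s <= w)%N -> 0 <= g s) -> (u <= t <= w)%N -> 0 < g t ->
  forall s, (u < s < w)%N -> 0 < g s.
Proof.
move=> Hc Hnn /andP[ut tw] gt s /andP[us sw].
have Hch := @hchain R g u w Hc.
case: (ltngtP s t) => [st|ts|->] //.
- case: (lerP (g s.+1 - g s) 0) => hs.
  + have := @tele_le R g s (t - s) _.
    rewrite subnKC ?(ltnW st) // => /(_ _) H.
    apply: lt_le_trans gt (H _) => j sj jt.
    have := Hch s (j - s)%N ltac:(lia) ltac:(lia).
    rewrite subnKC // => h; lra.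
  + have Es : s = s.-1.+1 by lia.
    have := Hch s.-1 1%N ltac:(lia) ltac:(lia).
    rewrite addn1 -Es => h.
    have := Hnn s.-1 ltac:(lia); lra.
- have Es : s = s.-1.+1 by lia.
  case: (lerP 0 (g s - g s.-1)) => hs.
  + have := @tele_ge R g t (s - t) _.
    rewrite subnKC ?(ltnW ts) // => /(_ _) H.
    apply: lt_le_trans gt (H _) => j sj jt.
    have := Hch j (s.-1 - j)%N ltac:(lia) ltac:(lia).
    have -> : (j + (s.-1 - j))%N = s.-1 by lia.
    rewrite -Es => h; lra.
  + have := Hch s.-1 1%N ltac:(lia) ltac:(lia).
    rewrite addn1 -Es => h.
    have := Hnn s.+1 ltac:(lia); lra.
Qed.
Lemma mono_gen (R : realFieldType) d (b : nat -> R) :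
  (forall i, (1 <= i <= d)%N -> b i.+1 <= b i) ->
  forall i j, (1 <= i)%N -> (i <= j)%N -> (j <= d.+1)%N -> b j <= b i.
Proof.
move=> H i j i1 ij jd.
have -> : j = (i + (j - i))%N by lia.
have : (i + (j - i) <= d.+1)%N by lia.
elim: (j - i)%N => [|k IH] hk; first by rewrite addn0.
rewrite addnS; apply: le_trans (IH ltac:(lia)); apply: H; lia.
Qed.

Lemma Lrec (R : realFieldType) d (b : nat -> R) s :
  PS_lhs d b s.+1 = PS_lhs d b s * (b s.+1 - b d.+1).
Proof. by rewrite /PS_lhs big_nat_recr. Qed.

Lemma Rrec (R : realFieldType) d (b : nat -> R) s : (s <= d)%N ->
  PS_rhs d b s = PS_rhs d b s.+1 + (b s.+1 - b d.+1).
Proof. move=> sd; rewrite /PS_rhs (big_ltn (m := s.+1)) ?ltnS //; lra. Qed.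

Lemma L0 (R : realFieldType) d (b : nat -> R) : PS_lhs d b 0 = 1.
Proof. by rewrite /PS_lhs big_geq. Qed.

Lemma R0 (R : realFieldType) d (b : nat -> R) :
  \sum_(1 <= i < d.+2) b i = 1 -> PS_rhs d b 0 = 1.
Proof.
move=> H; rewrite /PS_rhs sumrB sumr_const_nat H -mulr_natl.
have -> : (d.+2 - 1)%N = d.+1 by lia.
lra.
Qed.

Lemma gconc (R : realFieldType) d (b : nat -> R) s :
  (s.+1 <= d)%N -> b s.+1 = b s.+2 -> 0 <= PS_lhs d b s ->
  (PS_rhs d b s.+2 - PS_lhs d b s.+2) - (PS_rhs d b s.+1 - PS_lhs d b s.+1) <=
  (PS_rhs d b s.+1 - PS_lhs d b s.+1) - (PS_rhs d b s - PS_lhs d b s).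
Proof.
move=> sd E HL; rewrite (@Rrec R d b s (ltnW sd)) (@Rrec R d b s.+1 sd) !Lrec E.
set x := b s.+2 - b d.+1; set L := PS_lhs d b s; set Q := PS_rhs d b s.+2.
have h : 0 <= L * ((1 - x) * (1 - x)) by apply: mulr_ge0 HL _; rewrite -expr2 sqr_ge0.
nra.
Qed.

Lemma block_start (R : realFieldType) (b : nat -> R) t : (1 <= t)%N ->
  exists p, [/\ (1 <= p <= t)%N, (p = 1%N \/ b p.-1 != b p) &
            forall i, (p <= i <= t)%N -> b i = b t].
Proof.
elim: t => [//|t IH] _.
case: (posnP t) => [->|t0].
  exists 1%N; split => //; first by left.
  by move=> i /andP[a c]; have -> : i = 1%N by lia.
have [p [hp1 hp2 hp3]] := IH t0.
have [E|N] := eqVneq (b t) (b t.+1).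
  exists p; split => //; first by lia.
  move=> i /andP[a c]; case: (ltngtP i t.+1) => [it|//|->//]; last by lia.
  by rewrite -E; apply: hp3; lia.
exists t.+1; split => //; first by lia.
  by right.
by move=> i /andP[a c]; have -> : i = t.+1 by lia.
Qed.

Lemma block_end (R : realFieldType) (b : nat -> R) k : forall j,
  b (j + k)%N != b (j + k).+1 ->
  exists q, [/\ (j <= q <= j + k)%N, b q != b q.+1 &
            forall i, (j <= i <= q)%N -> b i = b j].
Proof.
elim: k => [|k IH] j H.
  exists j; rewrite addn0 in H; split => //; first by lia.
  by move=> i /andP[a c]; have -> : i = j by lia.
have [E|N] := eqVneq (b j) (b j.+1).
  have H' : b (j.+1 + k)%N != b (j.+1 + k).+1 by rewrite addSnnS.
  have [q [hq1 hq2 hq3]] := IH j.+1 H'.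
  exists q; split => //; first by lia.
  move=> i /andP[a c]; case: (eqVneq i j) => [->//|ij].
  by rewrite E; apply: hq3; lia.
exists j; split => //; first by lia.
by move=> i /andP[a c]; have -> : i = j by lia.
Qed.

Lemma prod_upd_c (R : realFieldType) (r : seq nat) (F G : nat -> R) j c :
  j \in r -> uniq r -> (forall i, i != j -> G i = F i) ->
  (\prod_(i <- r) (G i - c)) * (F j - c) = (G j - c) * \prod_(i <- r) (F i - c).
Proof.
move=> jr ur H; apply: (@prod_upd R r (fun i => F i - c) (fun i => G i - c) j jr ur).
by move=> i ij /=; rewrite H.
Qed.

Lemma prod_out_c (R : realFieldType) (r : seq nat) (F G : nat -> R) j c :
  j \notin r -> (forall i, i != j -> G i = F i) ->
  \prod_(i <- r) (G i - c) = \prod_(i <- r) (F i - c).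
Proof.
move=> jr H; apply: (@prod_out R r (fun i => F i - c) (fun i => G i - c) j jr).
by move=> i ij /=; rewrite H.
Qed.

Lemma sum_upd_c (R : realFieldType) (r : seq nat) (F G : nat -> R) j c :
  j \in r -> uniq r -> (forall i, i != j -> G i = F i) ->
  (\sum_(i <- r) (G i - c)) + (F j - c) = (G j - c) + \sum_(i <- r) (F i - c).
Proof.
move=> jr ur H; apply: (@sum_upd R r (fun i => F i - c) (fun i => G i - c) j jr ur).
by move=> i ij /=; rewrite H.
Qed.

Lemma sum_out_c (R : realFieldType) (r : seq nat) (F G : nat -> R) j c :
  j \notin r -> (forall i, i != j -> G i = F i) ->
  \sum_(i <- r) (G i - c) = \sum_(i <- r) (F i - c).
Proof.
move=> jr H; apply: (@sum_out R r (fun i => F i - c) (fun i => G i - c) j jr).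
by move=> i ij /=; rewrite H.
Qed.

Lemma spread_c (R : realFieldType) (x y e c : R) : 0 < e -> y <= x ->
  (y - e - c) * (x + e - c) < (y - c) * (x - c).
Proof.
move=> e0 yx.
have h1 : 0 <= e * (x - y) by apply: mulr_ge0; lra.
have h2 : 0 < e * e by apply: mulr_gt0.
nra.
Qed.

Lemma spread (R : realFieldType) (x y e : R) : 0 < e -> y <= x ->
  (y - e) * (x + e) < y * x.
Proof.
move=> e0 yx.
have h1 : 0 <= e * (x - y) by apply: mulr_ge0; lra.
have h2 : 0 < e * e by apply: mulr_gt0.
nra.
Qed.

Ltac nlia := repeat match goal with
 | H : ?T |- _ => lazymatch T with
     | is_true (leq _ _) => fail
     | is_true (andb _ _) => fail
     | @eq nat _ _ => fail
     | nat => fail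
     | _ => clear H
   end
 end; lia.

Theorem lemma3p1 (R : realType) (d : nat) (hd : (1 <= d)%N) (b : nat -> R)
  (hopt : optimal d b) :
  exists l : nat, (l <= d)%N /\
    (forall t, (l.+1 <= t <= d)%N -> b t = b t.+1) /\
    (forall t, (1 <= t <= l.-1)%N -> PS_lhs d b t = PS_rhs d b t).
Proof.
move: hopt => [[Hmono [Hc0 [Hsum HPS]]] Hopt].
have mono := @mono_gen R d b Hmono.
have Hex : exists i, (0 < i)%N && (b i == b d.+1) by exists d.+1; rewrite eqxx.
case: (ex_minnP Hex) => m /andP[m0 /eqP bm] mmin.
have md : (m <= d.+1)%N by apply: mmin; rewrite eqxx.
have Hge : forall i, (1 <= i <= d.+1)%N -> b d.+1 <= b i.
  by move=> i /andP[a z]; apply: mono.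
have Heq : forall i, (m <= i <= d.+1)%N -> b i = b d.+1.
  move=> i /andP[a z]; apply/eqP; rewrite eq_le Hge ?andbT; last by nlia.
  by rewrite -bm; apply: mono => //; nlia.
have Hgt : forall i, (1 <= i)%N -> (i < m)%N -> b d.+1 < b i.
  move=> i i1 im; rewrite lt_neqAle Hge ?andbT; last by nlia.
  apply/negP => /eqP E; have := mmin i; rewrite i1 -E eqxx /= => /(_ isT); nlia.
exists m.-1; split; first by nlia.
split.
  move=> t /andP[a z]; rewrite !Heq //; nlia.
move=> t /andP[t1 tm].
apply/eqP; rewrite eq_le HPS ?andTb; last by nlia.
rewrite leNgt; apply/negP => slack.

have t2m : (t.+2 <= m)%N by nlia.
have [p [/andP[p1 pt] hp2 hp3]] := @block_start R b t t1.
have bm1 : b (t.+1 + (m.-1 - t.+1))%N != b (t.+1 + (m.-1 - t.+1)).+1.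
  have -> : (t.+1 + (m.-1 - t.+1))%N = m.-1 by nlia.
  have -> : m.-1.+1 = m by nlia.
  by rewrite bm; apply/eqP => E; have := Hgt m.-1 ltac:(nlia) ltac:(nlia); rewrite E ltxx.
have [q [/andP[tq qm] hq2 hq3]] := @block_end R b _ _ bm1.
have qm' : (q <= m.-1)%N by nlia.
have pq : (p < q)%N by nlia.
have qd : (q <= d)%N by nlia.
have aq : b d.+1 < b q by apply: Hgt; nlia.
have bqp : b q <= b p by apply: mono; nlia.
have Hq : b q.+1 < b q by rewrite lt_neqAle eq_sym hq2 /=; apply: mono; nlia.
have Hp : (2 <= p)%N -> b p < b p.-1.
  move=> p2; case: hp2 => [?|N]; first nlia.
  by rewrite lt_neqAle eq_sym N /=; apply: mono; nlia.
pose g s := PS_rhs d b s - PS_lhs d b s.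
have HL0 : forall s, (s <= d.+1)%N -> 0 <= PS_lhs d b s.
  move=> s sd; rewrite /PS_lhs big_seq; apply: prodr_ge0 => i.
  rewrite mem_index_iota => /andP[a z].
  rewrite subr_ge0; apply: Hge; nlia.
have Hg0 : forall s, (s <= d)%N -> 0 <= g s.
  move=> s sd; rewrite /g subr_ge0; case: (posnP s) => [->|s0].
    by rewrite L0 (@R0 R d b Hsum).
  by apply: HPS; nlia.
have Hconc : forall u w, (forall s, (u <= s)%N -> (s.+2 <= w)%N -> b s.+1 = b s.+2) ->
   (w <= d)%N ->
   forall s, (u <= s)%N -> (s.+2 <= w)%N -> g s.+2 - g s.+1 <= g s.+1 - g s.
  move=> u w HE wd s us sw; rewrite /g; apply: gconc; [nlia | exact: HE | apply: HL0; nlia].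
have gt : 0 < g t by rewrite /g subr_gt0.
have Hslack : forall s, (p <= s < q)%N -> 0 < g s.
  move=> s /andP[ps sq].
  case: (ltngtP s t) => [st|ts|->//].
  - apply: (@concave_pos R g p.-1 t t) => //.
    + apply: Hconc; last by nlia.
      move=> s' a z; have h1 := hp3 s'.+1 ltac:(nlia); have h2 := hp3 s'.+2 ltac:(nlia); by rewrite h1 h2.
    + move=> s' /andP[a z]; apply: Hg0; nlia.
    + nlia.
    + nlia.
  - apply: (@concave_pos R g t q t) => //.
    + apply: Hconc => //.
      move=> s' a z; have h1 := hq3 s'.+1 ltac:(nlia); have h2 := hq3 s'.+2 ltac:(nlia); by rewrite h1 h2.
    + move=> s' /andP[a z]; apply: Hg0; nlia.
    + nlia.
    + nlia.
have cpos : forall i, (1 <= i <= d)%N -> 0 < b i.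
  move=> i /andP[i1 id]; case: (ltnP i m) => im.
    exact: le_lt_trans Hc0 (Hgt i i1 im).
  rewrite Heq; last by nlia.
  rewrite lt_neqAle Hc0 andbT; apply/eqP => c0.
  have := HPS m.-1 ltac:(nlia); rewrite /PS.
  have -> : PS_rhs d b m.-1 = 0.
    rewrite /PS_rhs -c0 mulr0 addr0 big_seq big1 // => j.
    rewrite mem_index_iota => /andP[a z].
    rewrite Heq; [by rewrite -c0 subrr | nlia].
  have : 0 < PS_lhs d b m.-1.
    rewrite /PS_lhs big_seq; apply: prodr_gt0 => j; rewrite mem_index_iota => /andP[a z].
    rewrite subr_gt0; apply: Hgt; nlia.
  move=> h1 h2; have := lt_le_trans h1 h2; rewrite ltxx.
  done.

pose ap := b p - b d.+1.
have ap0 : 0 < ap by rewrite /ap subr_gt0; apply: Hgt; nlia.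
pose x0 := Order.min (if (2 <= p)%N then b p.-1 - b p else 1) (b q - b q.+1).
have x00 : 0 < x0.
  rewrite /x0 lt_min subr_gt0 Hq andbT; case: ifP => // p2; rewrite subr_gt0; exact: Hp.
pose f s := if (p <= s)%N then g s * ap / (PS_lhs d b s + ap) else 1.
have [e [e0 ex ef]] : exists e, [/\ 0 < e, e <= x0 & forall s, (s < q)%N -> e <= f s].
  apply: small_exists => // s sq; rewrite /f; case: ifP => ps; last exact: ltr01.
  apply: divr_gt0; first by apply: mulr_gt0 ap0; apply: Hslack; nlia.
  have := HL0 s ltac:(nlia); lra.
have eq1 : e <= b q - b q.+1 by apply: le_trans ex _; rewrite /x0 ge_min lexx orbT.
have ep1 : (2 <= p)%N -> e <= b p.-1 - b p.
  by move=> p2; apply: le_trans ex _; rewrite /x0 ge_min p2 /= lexx.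
pose b1 i := if i == p then b p + e else b i.
pose b' i := if i == q then b q - e else b1 i.
have b1p : b1 p = b p + e by rewrite /b1 eqxx.
have b1o : forall i, i != p -> b1 i = b i by move=> i /negbTE h; rewrite /b1 h.
have b'q : b' q = b q - e by rewrite /b' eqxx.
have b'o : forall i, i != q -> b' i = b1 i by move=> i /negbTE h; rewrite /b' h.
have qp : q != p by rewrite neq_ltn pq orbT.
have b1q : b1 q = b q by apply: b1o.
have b'p : b' p = b p + e by rewrite b'o ?b1p // eq_sym.
have b'oo : forall i, i != p -> i != q -> b' i = b i by move=> i h1 h2; rewrite b'o // b1o.
have b'c : b' d.+1 = b d.+1 by apply: b'oo; apply/eqP; nlia.
have Hfeas : feasible d b'.
  split; [|split; [|split]].
  - move=> i /andP[i1 id].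
    have [iq|iq] := eqVneq i q.
      rewrite iq b'q b'oo; [lra | apply/eqP; nlia | apply/eqP; nlia].
    have [ip|ip] := eqVneq i p.
      rewrite ip b'p; have [iq1|iq1] := eqVneq p.+1 q.
        rewrite iq1 b'q; lra.
      rewrite b'oo; [|apply/eqP; nlia|exact iq1].
      have := Hmono p ltac:(nlia); lra.
    rewrite (b'oo i ip iq); have [iq1|iq1] := eqVneq i.+1 q.
      rewrite iq1 b'q; have : b q <= b i by rewrite -iq1; apply: Hmono; nlia.
      lra.
    have [ip1|ip1] := eqVneq i.+1 p.
      have p2 : (2 <= p)%N by rewrite -ip1 ltnS.
      rewrite ip1 b'p; move: (ep1 p2); rewrite -ip1 /=; lra.
    rewrite b'oo //; apply: Hmono; nlia.
  - by rewrite b'c.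
  - have S1 : \sum_(1 <= i < d.+2) b1 i + b p = b1 p + \sum_(1 <= i < d.+2) b i.
      apply: (@sum_upd R _ b b1 p); [rewrite mem_index_iota; nlia | exact: iota_uniq | exact: b1o].
    have S2 : \sum_(1 <= i < d.+2) b' i + b1 q = b' q + \sum_(1 <= i < d.+2) b1 i.
      apply: (@sum_upd R _ b1 b' q); [rewrite mem_index_iota; nlia | exact: iota_uniq | exact: b'o].
    rewrite b1p Hsum in S1; rewrite b1q b'q in S2; lra.
  - move=> s /andP[s1 sd]; rewrite /PS /PS_lhs /PS_rhs b'c.
    have HPSs := HPS s ltac:(nlia); move: HPSs; rewrite /PS /PS_lhs /PS_rhs => HPSs.
    have HL := HL0 s ltac:(nlia); rewrite /PS_lhs in HL.
    set c := b d.+1 in HPSs HL *.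
    set L := \prod_(1 <= i < s.+1) (b i - c) in HPSs HL *.
    set S := \sum_(s.+1 <= j < d.+2) (b j - c) in HPSs *.
    set L1 := \prod_(1 <= i < s.+1) (b1 i - c).
    set S1 := \sum_(s.+1 <= j < d.+2) (b1 j - c).
    set L' := \prod_(1 <= i < s.+1) (b' i - c).
    set S' := \sum_(s.+1 <= j < d.+2) (b' j - c).
    have u1 : uniq (index_iota 1 s.+1) by exact: iota_uniq.
    have u2 : uniq (index_iota s.+1 d.+2) by exact: iota_uniq.
    case: (ltnP s p) => sp.
      have E1 : L1 = L by apply: (@prod_out_c R _ b b1 p); [rewrite mem_index_iota; nlia | exact: b1o].
      have E2 : L' = L1 by apply: (@prod_out_c R _ b1 b' q); [rewrite mem_index_iota; nlia | exact: b'o].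
      have E3 : S1 + (b p - c) = (b1 p - c) + S.
        by apply: (@sum_upd_c R _ b b1 p); [rewrite mem_index_iota; nlia | exact: u2 | exact: b1o].
      have E4 : S' + (b1 q - c) = (b' q - c) + S1.
        by apply: (@sum_upd_c R _ b1 b' q); [rewrite mem_index_iota; nlia | exact: u2 | exact: b'o].
      rewrite b1p in E3; rewrite b1q b'q in E4; rewrite E2 E1; lra.
    case: (ltnP s q) => sq.
      have E1 : L1 * (b p - c) = (b1 p - c) * L.
        by apply: (@prod_upd_c R _ b b1 p); [rewrite mem_index_iota; nlia | exact: u1 | exact: b1o].
      have E2 : L' = L1 by apply: (@prod_out_c R _ b1 b' q); [rewrite mem_index_iota; nlia | exact: b'o].
      have E3 : S1 = S by apply: (@sum_out_c R _ b b1 p); [rewrite mem_index_iota; nlia | exact: b1o].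
      have E4 : S' + (b1 q - c) = (b' q - c) + S1.
        by apply: (@sum_upd_c R _ b1 b' q); [rewrite mem_index_iota; nlia | exact: u2 | exact: b'o].
      rewrite b1p in E1; rewrite b1q b'q E3 in E4.
      have F := ef s sq; rewrite /f sp /g /PS_lhs /PS_rhs -/c -/L -/S in F.
      have ap0' : 0 < L + ap by lra.
      rewrite ler_pdivlMr // in F.
      rewrite E2 -(ler_pM2r ap0) E1 /ap -/c.
      rewrite /ap -/c in F.
      nra.
    have E1 : L1 * (b p - c) = (b1 p - c) * L.
      by apply: (@prod_upd_c R _ b b1 p); [rewrite mem_index_iota; nlia | exact: u1 | exact: b1o].
    have E2 : L' * (b1 q - c) = (b' q - c) * L1.
      by apply: (@prod_upd_c R _ b1 b' q); [rewrite mem_index_iota; nlia | exact: u1 | exact: b'o].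
    have E3 : S1 = S by apply: (@sum_out_c R _ b b1 p); [rewrite mem_index_iota; nlia | exact: b1o].
    have E4 : S' = S1 by apply: (@sum_out_c R _ b1 b' q); [rewrite mem_index_iota; nlia | exact: b'o].
    rewrite b1p in E1; rewrite b1q b'q in E2.
    have E : L' * (b q - c) * (b p - c) = (b q - e - c) * ((b p + e - c) * L).
      by rewrite E2 -mulrA E1.
    have K1 : (b q - e - c) * (b p + e - c) <= (b q - c) * (b p - c) by apply/ltW/spread_c.
    have aq' : c < b q := aq.
    have BA : 0 < (b q - c) * (b p - c) by apply: mulr_gt0; lra.
    have K2 : L' * ((b q - c) * (b p - c)) <= L * ((b q - c) * (b p - c)).
      have := ler_wpM2r HL K1; rewrite -mulrA -E [L * _]mulrC; by rewrite !mulrA.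
    rewrite ler_pM2r // in K2.
    rewrite E4 E3; lra.
have Hob := Hopt b' Hfeas.
move: Hob; rewrite /objective.
set O := \prod_(1 <= i < d.+1) b i.
set O1 := \prod_(1 <= i < d.+1) b1 i.
set O' := \prod_(1 <= i < d.+1) b' i.
have O0 : 0 < O.
  rewrite /O big_seq; apply: prodr_gt0 => i; rewrite mem_index_iota => /andP[a z].
  apply: cpos; nlia.
have E1 : O1 * b p = b1 p * O.
  by apply: (@prod_upd R _ b b1 p); [rewrite mem_index_iota; nlia | exact: iota_uniq | exact: b1o].
have E2 : O' * b1 q = b' q * O1.
  by apply: (@prod_upd R _ b1 b' q); [rewrite mem_index_iota; nlia | exact: iota_uniq | exact: b'o].
rewrite b1p in E1; rewrite b1q b'q in E2.
have E : O' * b q * b p = (b q - e) * ((b p + e) * O) by rewrite E2 -mulrA E1.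
have bq0 : 0 < b q by apply: cpos; nlia.
have K1 : (b q - e) * (b p + e) < b q * b p by apply: spread.
have BA : 0 < b q * b p by apply: mulr_gt0; lra.
have K2 : O' * (b q * b p) < O * (b q * b p).
  have := K1; rewrite -(ltr_pM2r O0) -mulrA -E [O * _]mulrC; by rewrite !mulrA.
rewrite ltr_pM2r // in K2.
move=> h; have := lt_le_trans K2 h; rewrite ltxx.
done.
Qed.
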